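(* Let $\big(Z,\psi^{(z)},(I^{(z)}_A,\phi^{(z)}_A)_{A\in P_{\mathbb A}}\big)$ and $\big(C,\psi^{(c)},(I^{(c)}_A,\phi^{(c)}_A)_{A\in P_{\mathbb A}}\big)$ be two minimal action-induced representations (minAIRs) of the same family of action-induced datasets $\{D_A\}_{A\in P_{\mathbb A}}$, where $Z\subseteq\mathbb R^{d_Z}$ and $C\subseteq\mathbb R^{d_C}$ are convex. Let $\mathcal A=\{A_1,\dots,A_m\}\subseteq P_{\mathbb A}$ be a nonempty set of allowed action combinations, and put $I^{(z)}_{\mathcal A}=\bigcap_{A\in\mathcal A}I^{(z)}_A$ and $I^{(c)}_{\mathcal A}=\bigcap_{A\in\mathcal A}I^{(c)}_A$. For $z\in Z$ write $z_{\mathcal A}=(z_i)_{i\in I^{(z)}_{\mathcal A}}$, $Z_{\mathcal A}=\{z_{\mathcal A}: z\in Z\}$, and similarly $\pi^{(c)}_{\mathcal A}$ denotes the coordinate projection onto the coordinates in $I^{(c)}_{\mathcal A}$ (applied to elements of $C_{A_j}$, whose coordinates are indexed by $I^{(c)}_{A_j}\supseteq I^{(c)}_{\mathcal A}$), with $C_{\mathcal A}=\{(c_i)_{i\in I^{(c)}_{\mathcal A}}: c\in C\}$. Then for any $A_j\in\mathcal A$, the map $g_{\mathcal A}:Z_{A_j}\to C_{\mathcal A}$, $$g_{\mathcal A}:=\pi^{(c)}_{\mathcal A}\circ(\phi^{(c)}_{A_j})^{-1}\circ\phi^{(z)}_{A_j},$$ depends only on the overlap coordinates $z_{\mathcal A}$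 of its argument $z_{A_j}$, and neither on $j$ nor on the completion of $z_{\mathcal A}$ to $z_{A_j}\in Z_{A_j}$. Moreover, regarded as a function of $z_{\mathcal A}\in Z_{\mathcal A}$ only, $g_{\mathcal A}:Z_{\mathcal A}\to C_{\mathcal A}$ is bijective.
   Context: Setting. $X\subseteq\mathbb R^{d_x}$ is a continuous manifold (the set of input data points), $\mathbb A=\{1,\dots,n_{\mathbb A}\}$ is a finite set of elementary actions, and $P_{\mathbb A}\subseteq\mathcal P(\mathbb A)$ is a set of allowed action combinations. For each $A\in P_{\mathbb A}$ there is a deterministic map $y_A:X\to Y_A\subseteq\mathbb R^{d_{Y_A}}$ whose image $Y_A$ is a continuous manifold; $D_A=\{(x,y_A(x)):x\in X\}$ is the action-induced dataset for $A$. Action-induced representation (AIR). Let $Z\subseteq\mathbb R^{d_Z}$ be a continuous manifold (latent space). For each $A\in P_{\mathbb A}$ let $I_A\subseteq\{1,\dots,d_Z\}$ be an index set, $\pi_A:Z\to Z_A\subseteq\mathbb R^{|I_A|}$, $\pi_A(z)=z_A:=(z_i)_{i\in I_A}$, with $Z_A=\{(z_i)_{i\in I_A}:z\in Z\}$. If there are continuous maps $\psi:X\to Z$ and $\phi_A:Z_A\to Y_A$ ($A\in P_{\mathbb A}$) with $(\phi_A\circ\pi_A\circ\psi)(x)=y_A(x)$ for all $x\in X$, then $\big(Z,\psi,(I_A,\phi_A)_{A\in P_{\mathbb A}}\big)$ is an AIR of $\{D_A\}_{A\in P_{\mathbb A}}$. Minimal AIR (minAIR). An AIR is minimal if: (1)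 $\psi:X\to Z$ is surjective, $d_Z=\big|\bigcup_{A\in P_{\mathbb A}}I_A\big|$, and every $\phi_A:Z_A\to Y_A$ is invertible with continuous inverse; (2) $Z$ is open in $\mathbb R^{d_Z}$ and carries the subspace topology of $\mathbb R^{d_Z}$. *)

(* Defs.v *)
From HB Require Import structures.
From mathcomp Require Import all_boot all_order all_algebra.
From mathcomp Require Import all_classical all_reals topology normedtype.
Unset Printing Implicit Defensive.
Import Order.TTheory GRing.Theory Num.Theory.
Import numFieldNormedType.Exports.
Local Open Scope classical_set_scope.
Local Open Scope ring_scope.

(* Coordinate projection z |-> z_I = (z_i)_{i in I}, I subset {0..n-1};
   the coordinates of z_I are listed in increasing order of i. *)
Definition proj {R : realType} {n : nat} (I : {set 'I_n}) (z : 'rV[R]_n)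
  : 'rV[R]_#|I| :=
  \row_(k < #|I|) z 0 (enum_val k).

(* Coordinate projection from a vector indexed by J onto the coordinates in
   I (meant for I \subset J): the k-th coordinate of the result is the
   coordinate of w indexed by the same element enum_val k of 'I_n. *)
Definition subproj {R : realType} {n : nat} (J I : {set 'I_n})
  (w : 'rV[R]_#|J|) : 'rV[R]_#|I| :=
  \row_(k < #|I|) \sum_(l < #|J|)
      (if enum_val l == enum_val k then w 0 l else 0).

Definition projset {R : realType} {n : nat} (I : {set 'I_n})
  (Z : set 'rV[R]_n) : set 'rV[R]_#|I| := proj I @` Z.

Definition convex_subset {R : realType} {n : nat} (Z : set 'rV[R]_n) :=
  forall z1 z2 (t : R), Z z1 -> Z z2 -> 0 <= t -> t <= 1 ->
    Z ((1 - t) *: z1 + t *: z2).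

(* Action-induced representation (Z, psi, (I_A, phi_A)_{A in PA}) of the
   datasets D_A = {(x, y A x) : x in X}, A in PA. *)
Definition is_AIR {R : realType} {nA dx dZ : nat}
  (PA : {set {set 'I_nA}}) (X : set 'rV[R]_dx)
  {dY : {set 'I_nA} -> nat} (y : forall A, 'rV[R]_dx -> 'rV[R]_(dY A))
  (Z : set 'rV[R]_dZ) (psi : 'rV[R]_dx -> 'rV[R]_dZ)
  (I : {set 'I_nA} -> {set 'I_dZ})
  (phi : forall A, 'rV[R]_#|I A| -> 'rV[R]_(dY A)) : Prop :=
  [/\ (forall x, X x -> Z (psi x)),
      {within X, continuous psi},
      (forall A, A \in PA ->
         forall w, projset (I A) Z w -> (y A @` X) (phi A w)),
      (forall A, A \in PA -> {within projset (I A) Z, continuous phi A}) &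
      (forall A, A \in PA -> forall x, X x -> phi A (proj (I A) (psi x)) = y A x)].

Definition is_minAIR {R : realType} {nA dx dZ : nat}
  (PA : {set {set 'I_nA}}) (X : set 'rV[R]_dx)
  {dY : {set 'I_nA} -> nat} (y : forall A, 'rV[R]_dx -> 'rV[R]_(dY A))
  (Z : set 'rV[R]_dZ) (psi : 'rV[R]_dx -> 'rV[R]_dZ)
  (I : {set 'I_nA} -> {set 'I_dZ})
  (phi : forall A, 'rV[R]_#|I A| -> 'rV[R]_(dY A)) : Prop :=
  [/\ is_AIR PA X y Z psi I phi,
      Z `<=` psi @` X,
      dZ = #|(\bigcup_(A in PA) I A)%SET|,
      (forall A, A \in PA ->
         exists g : 'rV[R]_(dY A) -> 'rV[R]_#|I A|,
           [/\ set_bij (projset (I A) Z) (y A @` X) (phi A),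
               {in projset (I A) Z, cancel (phi A) g},
               {in y A @` X, cancel g (phi A)} &
               {within y A @` X, continuous g}]) &
      open Z].

(* Main.v *)
Require Import Defs.
From HB Require Import structures.
From mathcomp Require Import all_boot all_order all_algebra.
From mathcomp Require Import all_classical all_reals topology normedtype.
From mathcomp Require Import ring lra.
Import Order.TTheory GRing.Theory Num.Theory.
Import numFieldNormedType.Exports.
Local Open Scope classical_set_scope.
Local Open Scope ring_scope.

Lemma proj_eqP (R : realType) n (I : {set 'I_n}) (u v : 'rV[R]_n) :
  Defs.proj I u = Defs.proj I v <-> (forall i, i \in I -> u 0 i = v 0 i).
Proof.
split.
- move=> H i Hi. move/rowP: H => /(_ (enum_rank_in Hi i)).
  by rewrite !mxE (enum_rankK_in Hi Hi).
- move=> H; apply/rowP => k; rewrite !mxE; apply: H; exact: enum_valP.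
Qed.

Lemma subproj_proj (R : realType) n (J I : {set 'I_n}) (z : 'rV[R]_n) :
  I \subset J -> subproj J I (Defs.proj J z) = Defs.proj I z.
Proof.
move=> sIJ; apply/rowP => k; rewrite !mxE.
have Jk : enum_val k \in J := fintype.subsetP sIJ _ (enum_valP k).
rewrite (bigD1 (enum_rank_in Jk (enum_val k))) //= (enum_rankK_in Jk Jk) eqxx mxE.
rewrite (enum_rankK_in Jk Jk).
rewrite big1 ?addr0 // => l Hl. case: eqP => // El; exfalso.
move/negP: Hl; apply; apply/eqP; apply: enum_val_inj. by rewrite El (enum_rankK_in Jk Jk).
Qed.

Lemma open_box {R : realType} {n} {Z : set 'rV[R]_n} {z} : open Z -> Z z ->
  exists2 e : R, 0 < e & forall w : 'rV[R]_n, (forall j, `|z 0 j - w 0 j| < e) -> Z w.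
Proof.
move=> oZ Zz.
have := oZ z Zz.
move/nbhs_ballP => [e e0 He]. exists e => // w Hw; apply: He.
split => // i j. rewrite (ord1 i). rewrite -ball_normE /ball_ /=. exact: Hw.
Qed.

Definition mixr {R : realType} {n} (a b : 'rV[R]_n) (k : nat) : 'rV[R]_n :=
  \row_j (if (j < k)%N then b 0 j else a 0 j).

Lemma mix_chain (R : realType) n (Z : set 'rV[R]_n) (S : {set 'I_n})
  (E : 'rV[R]_n -> 'rV[R]_n -> Prop) :
  (forall u v w, Z v -> E u v -> E v w -> E u w) ->
  (forall u v j, Z u -> Z v -> (forall k, k != j -> u 0 k = v 0 k) ->
     (j \in S -> u 0 j = v 0 j) -> E u v) ->
  (forall u, Z u -> E u u) ->
  forall a b, (forall k, (k <= n)%N -> Z (mixr a b k)) ->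
  (forall j, j \in S -> a 0 j = b 0 j) -> E a b.
Proof.
move=> trans loc refl a b HZ HS.
have: forall k, (k <= n)%N -> E a (mixr a b k).
  elim => [_|k IH Hk].
  - have -> : mixr a b 0 = a by apply/rowP => j; rewrite mxE.
    by apply: refl; have := HZ 0%N isT; rewrite (_ : mixr a b 0 = a) //; apply/rowP => j; rewrite mxE.
  - apply: (trans _ (mixr a b k)); [exact: HZ (ltnW Hk) | exact: IH (ltnW Hk) |].
    apply: (loc _ _ (Ordinal Hk)); [exact: HZ (ltnW Hk) | exact: HZ Hk | |].
    + move=> j Hj; rewrite !mxE.
      have hj : (j : nat) != k by apply: contra Hj => /eqP h; apply/eqP/val_inj.
      by rewrite ltnS [(j <= k)%N]leq_eqVlt (negbTE hj).
    + move=> HjS; rewrite !mxE /= ltnn ltnSn; exact: HS.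
move=> /(_ n (leqnn n)).
have -> : mixr a b n = b by apply/rowP => j; rewrite mxE ltn_ord.
done.
Qed.

Lemma convex_chain (R : realType) n (Z : set 'rV[R]_n) (S : {set 'I_n})
  (E : 'rV[R]_n -> 'rV[R]_n -> Prop) :
  open Z -> convex_subset Z ->
  (forall u v w, Z v -> E u v -> E v w -> E u w) ->
  (forall u v j, Z u -> Z v -> (forall k, k != j -> u 0 k = v 0 k) ->
     (j \in S -> u 0 j = v 0 j) -> E u v) ->
  (forall u, Z u -> E u u) ->
  forall z z', Z z -> Z z' -> (forall j, j \in S -> z 0 j = z' 0 j) -> E z z'.
Proof.
move=> oZ cZ trans loc refl z z' Zz Zz' HS.
have [e1 e10 B1] := open_box oZ Zz.
have [e2 e20 B2] := open_box oZ Zz'.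
pose e := Num.min e1 e2.
have e0 : 0 < e by rewrite lt_min e10 e20.
pose p (t : R) := (1 - t) *: z + t *: z'.
have Bp : forall t, 0 <= t -> t <= 1 -> forall w : 'rV[R]_n, (forall j, `|p t 0 j - w 0 j| < e) -> Z w.
  move=> t t0 t1 w Hw.
  have -> : w = (1 - t) *: (z + (w - p t)) + t *: (z' + (w - p t)).
    apply/rowP => j; rewrite !mxE; ring.
  apply: cZ => //.
  - apply: B1 => j.
    have -> : z 0 j - (z + (w - p t)) 0 j = p t 0 j - w 0 j by rewrite !mxE; ring.
    apply: (lt_le_trans (Hw j)); rewrite ge_min lexx //.
  - apply: B2 => j.
    have -> : z' 0 j - (z' + (w - p t)) 0 j = p t 0 j - w 0 j by rewrite !mxE; ring.
    apply: (lt_le_trans (Hw j)); rewrite ge_min lexx orbT //.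
pose d := \sum_(j < n) `|z 0 j - z' 0 j|.
pose N := (Num.truncn (d / e)).+1.
have N0 : (0 < N%:R :> R) by rewrite ltr0n.
have dN : forall j, `|z 0 j - z' 0 j| / N%:R < e.
  move=> j. rewrite ltr_pdivrMr //.
  apply: (le_lt_trans (y := d)).
    rewrite /d (bigD1 j) //= lerDl sumr_ge0 // => i _; exact: normr_ge0.
  rewrite mulrC -ltr_pdivrMr //; exact: truncnS_gt.
pose q (k : nat) := p (k%:R / N%:R).
have t0 : forall k : nat, 0 <= k%:R / N%:R :> R.
  move=> k; apply: divr_ge0; [exact: ler0n | exact: ltW].
have t1 : forall k : nat, (k <= N)%N -> k%:R / N%:R <= 1 :> R.
  by move=> k Hk; rewrite ler_pdivrMr // mul1r ler_nat.
have Zq : forall k, (k <= N)%N -> Z (q k).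
  move=> k Hk; apply: (Bp _ (t0 k) (t1 k Hk)) => j; rewrite subrr normr0 //.
have main : forall k, (k <= N)%N -> E z (q k).
  elim => [_|k IH Hk].
    have -> : q 0%N = z by apply/rowP => j; rewrite !mxE mul0r subr0 mul1r mul0r addr0.
    exact: refl.
  apply: (trans _ (q k)); [exact: Zq (ltnW Hk) | exact: IH (ltnW Hk) |].
  apply: (@mix_chain R n Z S E trans loc refl).
  + move=> m _; apply: (Bp _ (t0 k) (t1 k (ltnW Hk))) => j; rewrite [mixr _ _ _ 0 j]mxE.
    case: ifP => _; last by rewrite subrr normr0.
    have -> : q k 0 j - q k.+1 0 j = (z 0 j - z' 0 j) / N%:R.
      rewrite !mxE -natr1; field; exact: lt0r_neq0.
    rewrite normrM normfV (ger0_norm (ltW N0)); exact: dN.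
  + move=> j Hj; rewrite !mxE (HS j Hj); ring.
have -> : z' = q N.
  apply/rowP => j; rewrite !mxE divff ?subrr ?mul0r ?add0r ?mul1r //; exact: lt0r_neq0.
exact: main.
Qed.

Lemma keyK (R : realType) (nA dx dZ dC : nat) (PA calA : {set {set 'I_nA}})
  (X : set 'rV[R]_dx)
  (dY : {set 'I_nA} -> nat) (y : forall A, 'rV[R]_dx -> 'rV[R]_(dY A))
  (Z : set 'rV[R]_dZ) (psiz : 'rV[R]_dx -> 'rV[R]_dZ) (Iz : {set 'I_nA} -> {set 'I_dZ})
  (phiz : forall A, 'rV[R]_#|Iz A| -> 'rV[R]_(dY A))
  (C : set 'rV[R]_dC) (psic : 'rV[R]_dx -> 'rV[R]_dC) (Ic : {set 'I_nA} -> {set 'I_dC})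
  (phic : forall A, 'rV[R]_#|Ic A| -> 'rV[R]_(dY A)) :
  open Z -> convex_subset Z -> Z `<=` psiz @` X ->
  (forall x, X x -> C (psic x)) ->
  (forall A, A \in PA -> forall x, X x -> phiz A (Defs.proj (Iz A) (psiz x)) = y A x) ->
  (forall A, A \in PA -> forall x, X x -> phic A (Defs.proj (Ic A) (psic x)) = y A x) ->
  (forall A, A \in PA -> set_inj (projset (Ic A) C) (phic A)) ->
  calA \subset PA -> calA != finset.set0 ->
  forall x x', X x -> X x' -> (forall x, X x -> Z (psiz x)) ->
  Defs.proj (\bigcap_(A in calA) Iz A)%SET (psiz x)
    = Defs.proj (\bigcap_(A in calA) Iz A)%SET (psiz x') ->
  Defs.proj (\bigcap_(A in calA) Ic A)%SET (psic x)
    = Defs.proj (\bigcap_(A in calA) Ic A)%SET (psic x').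
Proof.
move=> oZ cZ surj XC eqz eqc inj sub ne x x' Xx Xx' XZ Hxx'.
set IzA := (\bigcap_(A in calA) Iz A)%SET.
set IcA := (\bigcap_(A in calA) Ic A)%SET.
pose E (u v : 'rV[R]_dZ) := forall x1 x2, X x1 -> X x2 -> psiz x1 = u -> psiz x2 = v ->
  Defs.proj IcA (psic x1) = Defs.proj IcA (psic x2).
have loc : forall A, A \in calA -> forall u v : 'rV[R]_dZ,
    (forall i, i \in Iz A -> u 0 i = v 0 i) -> E u v.
  move=> A HA u v Huv x1 x2 X1 X2 e1 e2.
  have PAA : A \in PA := fintype.subsetP sub _ HA.
  have : Defs.proj (Ic A) (psic x1) = Defs.proj (Ic A) (psic x2).
    apply: (inj A PAA).
    - by apply/mem_set; exists (psic x1) => //; apply: XC.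
    - by apply/mem_set; exists (psic x2) => //; apply: XC.
    rewrite !eqc // -!eqz //; congr (phiz A _).
    by apply/proj_eqP; rewrite e1 e2.
  move/proj_eqP => H; apply/proj_eqP => i Hi; apply: H.
  by move/bigcapP: Hi; apply.
have [A0 HA0] : exists A, A \in calA by apply/set0Pn.
apply: (@convex_chain R dZ Z IzA E oZ cZ _ _ _ (psiz x) (psiz x')
          (XZ x Xx) (XZ x' Xx')).
- move=> u v w Zv Euv Evw x1 x2 X1 X2 e1 e2.
  have [xv Xv ev] := surj v Zv.
  by rewrite (Euv x1 xv) // (Evw xv x2).
- move=> u v j Zu Zv Hk Hj.
  have [A HA HjA] : exists2 A, A \in calA & (j \in Iz A -> u 0 j = v 0 j).
    case: (boolP (j \in IzA)) => jS.
      by exists A0 => // _; apply: Hj.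
    have : ~ (forall A, A \in calA -> j \in Iz A).
      by move=> H; move/negP: jS; apply; apply/bigcapP.
    move/existsNP => [A /not_implyP [HA HjA]].
    by exists A => // /HjA.
  apply: (loc A HA) => i Hi.
  case: (eqVneq i j) => [eij|nij]; [subst i; exact: HjA | exact: Hk].
- move=> u Zu; exact: (loc A0 HA0).
- by apply/proj_eqP.
by [].
by [].
by [].
by [].
Qed.
Theorem theorem1 (R : realType) (nA dx : nat)
  (PA : {set {set 'I_nA}}) (X : set 'rV[R]_dx)
  (dY : {set 'I_nA} -> nat) (y : forall A, 'rV[R]_dx -> 'rV[R]_(dY A))
  (dZ : nat) (Z : set 'rV[R]_dZ) (psiz : 'rV[R]_dx -> 'rV[R]_dZ)
  (Iz : {set 'I_nA} -> {set 'I_dZ})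
  (phiz : forall A, 'rV[R]_#|Iz A| -> 'rV[R]_(dY A))
  (dC : nat) (C : set 'rV[R]_dC) (psic : 'rV[R]_dx -> 'rV[R]_dC)
  (Ic : {set 'I_nA} -> {set 'I_dC})
  (phic : forall A, 'rV[R]_#|Ic A| -> 'rV[R]_(dY A))
  (phic_inv : forall A, 'rV[R]_(dY A) -> 'rV[R]_#|Ic A|)
  (calA : {set {set 'I_nA}}) :
  is_minAIR PA X y Z psiz Iz phiz ->
  is_minAIR PA X y C psic Ic phic ->
  convex_subset Z -> convex_subset C ->
  (* phic_inv A is the inverse of phic A : C_A -> Y_A *)
  (forall A, A \in PA -> {in projset (Ic A) C, cancel (phic A) (phic_inv A)}) ->
  calA \subset PA -> calA != finset.set0 ->
  let IzA := (\bigcap_(A in calA) Iz A)%SET in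
  let IcA := (\bigcap_(A in calA) Ic A)%SET in
  exists G : 'rV[R]_#|IzA| -> 'rV[R]_#|IcA|,
    (forall Aj, Aj \in calA -> forall w, projset (Iz Aj) Z w ->
       subproj (Ic Aj) IcA (phic_inv Aj (phiz Aj w))
         = G (subproj (Iz Aj) IzA w)) /\
    set_bij (projset IzA Z) (projset IcA C) G.
Proof.
move=> [[Xz _ _ _ eqz] surjz _ bijz oZ] [[Xc _ _ _ eqc] surjc _ bijc oC] cZ cC inv
  sub ne IzA IcA.
have injz : forall A, A \in PA -> set_inj (projset (Iz A) Z) (phiz A).
  by move=> A HA; have [g [[_ ? _] _ _ _]] := bijz A HA.
have injc : forall A, A \in PA -> set_inj (projset (Ic A) C) (phic A).
  by move=> A HA; have [g [[_ ? _] _ _ _]] := bijc A HA.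
have K := @keyK R nA dx dZ dC PA calA X dY y Z psiz Iz phiz C psic Ic phic
  oZ cZ surjz Xc eqz eqc injc sub ne.
have K' := @keyK R nA dx dC dZ PA calA X dY y C psic Ic phic Z psiz Iz phiz
  oC cC surjc Xz eqc eqz injz sub ne.
pose G (v : 'rV[R]_#|IzA|) : 'rV[R]_#|IcA| :=
  match pselect (exists x, X x /\ Defs.proj IzA (psiz x) = v) with
  | left h => Defs.proj IcA (psic (projT1 (cid h)))
  | right _ => 0 end.
have GE : forall x, X x -> G (Defs.proj IzA (psiz x)) = Defs.proj IcA (psic x).
  move=> x Xx; rewrite /G; case: pselect => [h|nh].
    case: cid => x' [X' e] /=; exact: K.
  by exfalso; apply: nh; exists x.
exists G; split.
  move=> Aj HAj w [z Zz <-].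
  have [x Xx <-] := surjz z Zz.
  have PAj : Aj \in PA := fintype.subsetP sub _ HAj.
  rewrite subproj_proj; last exact: finset.bigcap_inf.
  rewrite GE // eqz // -(eqc Aj PAj x Xx) inv //.
    rewrite subproj_proj //; exact: finset.bigcap_inf.
  by apply/mem_set; exists (psic x) => //; apply: Xc.
split.
- move=> v [z Zz <-]; have [x Xx <-] := surjz z Zz.
  by rewrite GE //; exists (psic x) => //; apply: Xc.
- move=> v1 v2; rewrite !inE => -[z1 Z1 <-] [z2 Z2 <-].
  have [x1 X1 <-] := surjz z1 Z1; have [x2 X2 <-] := surjz z2 Z2.
  rewrite !GE // => e; exact: K'.
- move=> c [c0 Cc <-]; have [x Xx <-] := surjc c0 Cc.
  exists (Defs.proj IzA (psiz x)); first by exists (psiz x) => //; apply: Xz.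
  by rewrite GE.
Qed.
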